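(* There is a constant $c>0$ such that for every integer $\kappa\ge 1$ (large enough), every $\frac{\kappa+1}{\kappa}$-APLS for the minimum edge cover problem on graphs of odd-girth at least $2\kappa+1$ has proof size at least $c\log\kappa$; i.e., the proof size is $\Omega(\log\kappa)$.
   Context: All graphs are finite, connected and undirected, $G=(V,E)$, $n=|V|$, $N(v)$ is the set of neighbors of $v$; each node distinguishes its incident edges by port numbers $1,\dots,|N(v)|$. An input assignment $\mathsf{I}:V\to\{0,1\}^*$ and an output assignment $\mathsf{O}:V\to\{0,1\}^*$ give each node a local input and a local output. A configuration graph is a pair $\langle G,S\rangle$ with $S:V\to\{0,1\}^*$; an IO graph $\langle G,\mathsf I,\mathsf O\rangle$ (with $S(v)=\mathsf I(v)\cdot\mathsf O(v)$) is a configuration graph. Given a universe $\mathcal U$ of configuration graphs and disjoint families $\mathcal F_Y,\mathcal F_N\subseteq\mathcal U$, a gap proof labeling scheme (GPLS) consists of a prover which, given a configuration graph in $\mathcal F_Y$, assigns a label $L(v)\in\{0,1\}^*$ to every node, and a verifier which at each node $v$ receives only $\langle S(v),L(v),L^N(v)\rangle$, where $L^N(v)$ is the vector of labels of $v$'s neighbors (indexed by port), and outputs True or False; the verifier accepts if all nodes output True and rejects otherwise. The GPLS is correct if (i) for every configuration graph in $\mathcal F_Y$ the verifier accepts under the prover's labels, and (ii) for every configuration graph in $\mathcal F_N$ the verifier rejects under every label assignment; nothing is required for other configuration graphs. Its proof size is the maximum label length assigned by the prover over configuration graphs in $\mathcal F_Y$. A distributed graph optimization problem $\Psi=\langle\Pi,f\rangle$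 consists of a set $\Pi$ of IO graphs and an integer-valued objective $f$ on $\Pi$; $\langle G,\mathsf I\rangle$ is legal if some $\mathsf O$ has $\langle G,\mathsf I,\mathsf O\rangle\in\Pi$ (a feasible solution); $OPT_\Psi(G,\mathsf I)$ is the infimum (minimization) or supremum (maximization) of $f$ over feasible solutions. For $\alpha\ge 1$, an $\alpha$-APLS for $\Psi$ is a GPLS over $\mathcal U=\{\langle G,\mathsf I,\mathsf O\rangle:\langle G,\mathsf I\rangle\text{ legal}\}$ with $\mathcal F_Y$ the IO graphs in $\Pi$ with $f=OPT_\Psi(G,\mathsf I)$, and $\mathcal F_N$ equal to $\mathcal U$ minus the IO graphs in $\Pi$ with $f\le\alpha\cdot OPT_\Psi(G,\mathsf I)$ (minimization) resp. $f\ge OPT_\Psi(G,\mathsf I)/\alpha$ (maximization). Restricting to a graph family means the universe contains only IO graphs whose underlying graph lies in the family. Minimum edge cover: the output assignment encodes a set $C\subseteq E$; it is feasible iff $C$ is an edge cover (every node is incident on an edge of $C$), and $f=|C|$ is minimized. The odd-girth of a graph is the length of its shortest odd cycle ($\infty$ if there is none). *)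

(* Defs.v *)
From Stdlib Require Import Reals.
From mathcomp Require Import ssreflect ssrfun ssrbool eqtype ssrnat seq path
  choice fintype fingraph finset.


Definition bitstring := seq bool.

(* Port-numbered graphs.  Nodes are 'I_n; [pg_adj G v] lists the        *)
(* neighbours of v in port order: the neighbour at port i (1 <= i <=    *)
(* deg v) is [nth _ (pg_adj G v) (i-1)].                                *)
Record pgraph := PGraph {
  pg_n : nat;
  pg_adj : 'I_pg_n -> seq 'I_pg_n
}.

Definition node (G : pgraph) := 'I_(pg_n G).

Definition adjrel (G : pgraph) : rel (node G) := fun x y => y \in pg_adj G x.

Definition wf_graph (G : pgraph) : Prop :=
  [/\ 0 < pg_n G,
      forall v : node G, uniq (pg_adj G v),
      forall v : node G, v \notin pg_adj G v,
      forall u v : node G, adjrel G u v -> adjrel G v u &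
      forall u v : node G, connect (adjrel G) u v].

Definition odd_girth_ge (G : pgraph) (m : nat) : Prop :=
  forall c : seq (node G),
    uniq c -> cycle (adjrel G) c -> 3 <= size c -> odd (size c) -> m <= size c.

Definition assignment (G : pgraph) := node G -> bitstring.

(* The verifier at v receives <S(v), L(v), L^N(v)>, where L^N(v) is the
   vector of neighbour labels indexed by port. It does not see n, the
   identity of v, or anything else. *)
Definition verifier := bitstring -> bitstring -> seq bitstring -> bool.

Definition prover := forall G : pgraph, assignment G -> assignment G.

Definition accepts (V : verifier) (G : pgraph) (S L : assignment G) : Prop :=
  forall v : node G, V (S v) (L v) (map L (pg_adj G v)).

Definition io_config (G : pgraph) (I O : assignment G) : assignment G :=
  fun v => I v ++ O v.

(* O(v) is a bit vector over v's ports: bit i-1 says whether the edge   *)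
(* at port i belongs to C. O encodes an edge set iff every O(v) has     *)
(* length deg(v) and both endpoints of every edge agree.               *)
Definition ec_input (G : pgraph) : assignment G := fun _ => [::].

Definition marks (G : pgraph) (O : assignment G) (v u : node G) : bool :=
  nth false (O v) (index u (pg_adj G v)).

Definition encodes_edge_set (G : pgraph) (O : assignment G) : Prop :=
  (forall v : node G, size (O v) = size (pg_adj G v)) /\
  (forall u v : node G, adjrel G u v -> marks G O u v = marks G O v u).

Definition is_edge_cover (G : pgraph) (O : assignment G) : Prop :=
  forall v : node G, exists u : node G, adjrel G v u /\ marks G O v u.

Definition ec_feasible (G : pgraph) (O : assignment G) : Prop :=
  encodes_edge_set G O /\ is_edge_cover G O.

Definition ec_cost (G : pgraph) (O : assignment G) : nat :=
  #|[set p : node G * node G |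
      [&& (val p.1 < val p.2)%N, adjrel G p.1 p.2 & marks G O p.1 p.2]]|.

Definition ec_legal (G : pgraph) : Prop := exists O : assignment G, ec_feasible G O.

Definition ec_optimal (G : pgraph) (O : assignment G) : Prop :=
  ec_feasible G O /\ forall O' : assignment G, ec_feasible G O' -> ec_cost G O <= ec_cost G O'.

(* O feasible with f(O) <= ((k+1)/k) * OPT(G), i.e. k * f(O) <= (k+1) * OPT *)
Definition ec_approx (k : nat) (G : pgraph) (O : assignment G) : Prop :=
  ec_feasible G O /\
  forall O' : assignment G, ec_feasible G O' -> k * ec_cost G O <= k.+1 * ec_cost G O'.

Definition ec_universe (k : nat) (G : pgraph) : Prop :=
  wf_graph G /\ odd_girth_ge G (2 * k + 1) /\ ec_legal G.

Definition ec_APLS (k : nat) (V : verifier) (P : prover) : Prop :=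
  (forall (G : pgraph) (O : assignment G),
     ec_universe k G -> ec_optimal G O ->
     let S := io_config G (ec_input G) O in accepts V G S (P G S)) /\
  (forall (G : pgraph) (O : assignment G),
     ec_universe k G -> ~ ec_approx k G O ->
     forall L : assignment G, ~ accepts V G (io_config G (ec_input G) O) L).

(* "proof size >= x": the maximum label length assigned by the prover over
   the yes-instances is >= x, i.e. some yes-instance gets a label of
   length >= x. *)
Definition ec_proof_size_ge (k : nat) (P : prover) (x : R) : Prop :=
  exists (G : pgraph) (O : assignment G),
    ec_universe k G /\ ec_optimal G O /\
    exists v : node G,
      Rle x (INR (size (P G (io_config G (ec_input G) O) v))).

(* Main.v *)
Require Import Defs.
From Stdlib Require Import Reals Lia ZArith.
From mathcomp Require Import ssreflect ssrfun ssrbool eqtype ssrnat seq path choice fintype fingraph finset bigop.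
From mathcomp Require Import zify.
From Stdlib Require Import Lra Classical.

Set Implicit Arguments.
Unset Strict Implicit.

Section Cyc.
Variable m : nat.
Local Notation N := m.+3.

Definition csucc (v : 'I_N) : 'I_N := inord (if v < m.+2 then v.+1 else 0).
Definition cpred (v : 'I_N) : 'I_N := inord (if v == 0 :> nat then m.+2 else v.-1).

Lemma val_csucc v : (csucc v : nat) = if v < m.+2 then v.+1 else 0.
Proof. rewrite /csucc inordK //; have := ltn_ord v; case: ifP; lia. Qed.
Lemma val_cpred v : (cpred v : nat) = if v == 0 :> nat then m.+2 else v.-1.
Proof. rewrite /cpred inordK //; have := ltn_ord v; case: ifP; lia. Qed.

Ltac vv := rewrite /= ?val_csucc ?val_cpred.

Lemma cpred_succ v : cpred (csucc v) = v.
Proof. apply: val_inj; rewrite /= ?val_cpred ?val_csucc ?val_cpred; have := ltn_ord v; repeat case: ifP; lia. Qed.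
Lemma csucc_pred v : csucc (cpred v) = v.
Proof. apply: val_inj; rewrite /= ?val_cpred ?val_csucc ?val_cpred; have := ltn_ord v; repeat case: ifP; lia. Qed.
Lemma csucc_neq v : csucc v != v.
Proof. apply/eqP => /(congr1 val); vv; have := ltn_ord v; repeat case: ifP; lia. Qed.
Lemma cpred_neq v : cpred v != v.
Proof. apply/eqP => /(congr1 val); vv; have := ltn_ord v; repeat case: ifP; lia. Qed.
Lemma cpred_neq_succ v : cpred v != csucc v.
Proof. apply/eqP => /(congr1 val); vv; have := ltn_ord v; repeat case: ifP; lia. Qed.
Lemma csucc2_neq v : csucc (csucc v) != v.
Proof. apply/eqP => /(congr1 val); rewrite /= !val_csucc; have := ltn_ord v; repeat case: ifP; try lia;
  rewrite val_csucc; repeat case: ifP; lia. Qed.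
Lemma csucc_inj : injective csucc.
Proof. by move=> u v /(congr1 cpred); rewrite !cpred_succ. Qed.
Lemma cpred_inj : injective cpred.
Proof. by move=> u v /(congr1 csucc); rewrite !csucc_pred. Qed.

Definition cyc : pgraph := PGraph N (fun v : 'I_N => [:: cpred v; csucc v]).

Lemma adj_cyc (u v : 'I_N) : adjrel cyc u v = (v == cpred u) || (v == csucc u).
Proof. by rewrite /adjrel /= !inE. Qed.

Lemma marks_pred (O : assignment cyc) (v : 'I_N) : marks cyc O v (cpred v) = nth false (O v) 0.
Proof. by rewrite /marks /= eqxx. Qed.
Lemma marks_succ (O : assignment cyc) (v : 'I_N) : marks cyc O v (csucc v) = nth false (O v) 1.
Proof. by rewrite /marks /= eqxx (negbTE (cpred_neq_succ v)). Qed.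


Lemma consist_of (O : assignment cyc) :
  (forall u : 'I_N, nth false (O u) 1 = nth false (O (csucc u)) 0) ->
  forall u v, adjrel cyc u v -> marks cyc O u v = marks cyc O v u.
Proof.
move=> H u v; rewrite adj_cyc => /orP[]/eqP->.
  move: (H (cpred u)); rewrite csucc_pred => Hu.
  by rewrite marks_pred -Hu -marks_succ csucc_pred.
by rewrite marks_succ H -marks_pred cpred_succ.
Qed.

Lemma cover_of (O : assignment cyc) :
  (forall v : 'I_N, nth false (O v) 0 || nth false (O v) 1) -> is_edge_cover cyc O.
Proof.
move=> H v; case/orP: (H v) => h; [exists (cpred v) | exists (csucc v)];
  rewrite adj_cyc eqxx ?orbT; split=> //.
  by rewrite marks_pred.
by rewrite marks_succ.
Qed.

Lemma feas_of (O : assignment cyc) :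
  (forall v : 'I_N, size (O v) = 2) ->
  (forall u : 'I_N, nth false (O u) 1 = nth false (O (csucc u)) 0) ->
  (forall v : 'I_N, nth false (O v) 0 || nth false (O v) 1) -> ec_feasible cyc O.
Proof.
move=> hs hc hv; split; last exact: cover_of.
split; last exact: consist_of.
by move=> v; rewrite hs.
Qed.

Lemma walk j : j < N -> exists q, path (frel csucc) ord0 q /\ last ord0 q = inord j.
Proof.
elim: j => [|j IH] hj.
  by exists [::]; split=> //; apply: val_inj; rewrite /= inordK.
have [q [hq hl]] := IH (ltnW hj).
exists (rcons q (inord j.+1)); rewrite rcons_path last_rcons hq hl; split=> //=.
apply/eqP/val_inj; rewrite /= val_csucc !inordK; try lia.
by case: ifP; lia.
Qed.

Lemma wf_cyc : wf_graph cyc.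
Proof.
have sym : forall u v : 'I_N, adjrel cyc u v -> adjrel cyc v u.
  move=> u v; rewrite !adj_cyc => /orP[]/eqP->.
    by rewrite csucc_pred eqxx orbT.
  by rewrite cpred_succ eqxx.
split=> //.
- by move=> v; rewrite /= inE cpred_neq_succ.
- by move=> v; rewrite /= !inE !(eq_sym v) (negbTE (cpred_neq v)) (negbTE (csucc_neq v)).
have c0 : forall v : 'I_N, connect (adjrel cyc) ord0 v.
  move=> v; have [q [hq hl]] := walk (ltn_ord v).
  have hq' : path (adjrel cyc) ord0 q.
    apply: sub_path hq => x y /eqP <-; by rewrite adj_cyc eqxx orbT.
  have := path_connect hq' (mem_last ord0 q); rewrite hl inord_val //.
move=> u v; apply: connect_trans (c0 v).
have ss : symmetric (adjrel cyc) by move=> x y; apply/idP/idP; apply: sym.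
by rewrite (sym_connect_sym ss).
Qed.

Lemma wind (x : 'I_N) (p : seq 'I_N) : path (adjrel cyc) x p -> exists a b (z : Z),
  a + b = size p /\ Z.of_nat (last x p) = (Z.of_nat x + Z.of_nat a - Z.of_nat b + Z.of_nat N * z)%Z.
Proof.
elim: p x => [|y p IH] x.
  by move=> _; exists 0, 0, 0%Z; split=> //; rewrite [last _ _]/=; lia.
rewrite last_cons [path _ _ _]/= => /andP [hxy].
have hx : (x < m.+3)%N by exact: ltn_ord.
move: hxy; rewrite adj_cyc => /orP[]/eqP -> /IH [a [b [z [h1 h2]]]].
  move: h2; rewrite val_cpred; case: ifP => /eqP hx0 h2.
    exists a, b.+1, (z + 1)%Z; split; [rewrite /=; lia| ].
    rewrite Z.mul_add_distr_l Z.mul_1_r; move: (Z.of_nat N * z)%Z h2 => w h2; lia.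
  exists a, b.+1, z; split; [rewrite /=; lia| ].
  move: (Z.of_nat N * z)%Z h2 => w h2; lia.
move: h2; rewrite val_csucc; case: ifP => hx0 h2.
  exists a.+1, b, z; split; [rewrite /=; lia| ].
  move: (Z.of_nat N * z)%Z h2 => w h2; lia.
exists a.+1, b, (z - 1)%Z; split; [rewrite /=; lia| ].
rewrite Z.mul_sub_distr_l Z.mul_1_r; move: (Z.of_nat N * z)%Z h2 => w h2; move/negbT: hx0 => hx0; lia.
Qed.

Lemma oddgirth g : g <= N -> odd_girth_ge cyc g.
Proof.
move=> hg c _; case: c => [|x p] //= hc _ hodd.
change (is_true (g <= (@size 'I_N p).+1)); change (is_true (~~ odd (@size 'I_N p))) in hodd.
have [a [b [z [h1 h2]]]] := wind hc.
rewrite last_rcons size_rcons in h1 h2.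
have ho : exists h, (@size 'I_N p).+1 = 2 * h + 1 by exists (@size 'I_N p).+1./2; lia.
case: ho => h ho.
have [hz|[hz|hz]] : (z = 0 \/ 1 <= z \/ z <= -1)%Z by lia.
- rewrite hz Z.mul_0_r in h2.
  have e : forall t : Z, t = (t + Z.of_nat a - Z.of_nat b + 0)%Z -> a = b by move=> t; lia.
  have := e _ h2; lia.
- have : (Z.of_nat N <= Z.of_nat N * z)%Z by nia.
  move: (Z.of_nat N * z)%Z h2 => w h2 hw.
  have e : forall t : Z, t = (t + Z.of_nat a - Z.of_nat b + w)%Z -> (Z.of_nat b - Z.of_nat a = w)%Z by move=> t; lia.
  have := e _ h2; lia.
- have : (Z.of_nat N * z <= - Z.of_nat N)%Z by nia.
  move: (Z.of_nat N * z)%Z h2 => w h2 hw.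
  have e : forall t : Z, t = (t + Z.of_nat a - Z.of_nat b + w)%Z -> (Z.of_nat b - Z.of_nat a = w)%Z by move=> t; lia.
  have := e _ h2; lia.
Qed.

Definition AS (O : assignment cyc) (b : nat) := [set v : 'I_N | nth false (O v) b].

Definition edge (v : 'I_N) := if (v < csucc v)%N then (v, csucc v) else (csucc v, v).

Lemma A1_le_cost (O : assignment cyc) :
  (forall u v, adjrel cyc u v -> marks cyc O u v = marks cyc O v u) ->
  #|AS O 1| <= ec_cost cyc O.
Proof.
move=> hc; rewrite /ec_cost -(card_in_imset (f := edge)).
  apply: subset_leq_card; apply/subsetP => p /imsetP [v]; rewrite inE => hv ->.
  rewrite inE /edge; case: ifP => h /=; apply/and3P; split=> //.
  - by rewrite adj_cyc eqxx orbT.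
  - by rewrite marks_succ.
  - by have := csucc_neq v; rewrite -(inj_eq val_inj) /= => hn; move/negbT: h => h; lia.
  - by rewrite adj_cyc cpred_succ eqxx.
  - by rewrite -(hc v (csucc v)) ?marks_succ // adj_cyc eqxx orbT.
move=> u v _ _; rewrite /edge; case: ifP => hu; case: ifP => hv [e1 e2].
- exact: e1.
- by move: (csucc2_neq v); rewrite -e1 e2 eqxx.
- by move: (csucc2_neq v); rewrite -e2 e1 eqxx.
- exact: e2.
Qed.

Lemma A0_le_A1 (O : assignment cyc) :
  (forall u v, adjrel cyc u v -> marks cyc O u v = marks cyc O v u) ->
  #|AS O 0| <= #|AS O 1|.
Proof.
move=> hc; rewrite -(card_imset _ cpred_inj); apply: subset_leq_card.
apply/subsetP => w /imsetP [v]; rewrite !inE => hv ->.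
rewrite -marks_succ csucc_pred -(hc v (cpred v)) ?marks_pred //.
by rewrite adj_cyc eqxx.
Qed.

Definition gg (p : 'I_N * 'I_N) := if csucc p.1 == p.2 then p.1 else p.2.

Lemma cost_le_A1 (O : assignment cyc) :
  (forall u v, adjrel cyc u v -> marks cyc O u v = marks cyc O v u) ->
  ec_cost cyc O <= #|AS O 1|.
Proof.
move=> hc; rewrite /ec_cost.
set C := [set p : node cyc * node cyc | _].
have shape : forall p, p \in C ->
   ((p.1 = gg p /\ p.2 = csucc (gg p)) \/ (p.1 = csucc (gg p) /\ p.2 = gg p)).
  move=> [a b]; rewrite inE /gg /= => /and3P [_ hab _].
  case: ifP => [/eqP <-|hs]; first by left.
  move: hab; rewrite adj_cyc (eq_sym b (csucc a)) hs orbF => /eqP ->; right; by rewrite csucc_pred.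
rewrite -(card_in_imset (f := gg) (D := C)).
  apply: subset_leq_card; apply/subsetP => w /imsetP [p hp ->].
  have hp' := hp; rewrite inE in hp'; case/and3P: hp' => _ hadj hm.
  rewrite inE -marks_succ.
  case: (shape p hp) => [[e1 e2]|[e1 e2]].
    by rewrite -e2 -e1.
  by rewrite -e1 -e2 -(hc _ _ hadj).
move=> p q hp hq e.
have hp' := hp; rewrite inE in hp'; case/and3P: hp' => lp _ _.
have hq' := hq; rewrite inE in hq'; case/and3P: hq' => lq _ _.
case: (shape p hp) => [[p1 p2]|[p1 p2]]; case: (shape q hq) => [[q1 q2]|[q1 q2]];
  rewrite -e in q1 q2.
- by rewrite [p]surjective_pairing [q]surjective_pairing p1 p2 q1 q2.
- move: lp lq; rewrite p1 p2 q1 q2; lia.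
- move: lp lq; rewrite p1 p2 q1 q2; lia.
- by rewrite [p]surjective_pairing [q]surjective_pairing p1 p2 q1 q2.
Qed.

Lemma evens_le : #|[set v : 'I_N | ~~ odd v]| <= N.+1./2.
Proof.
pose f := fun i : 'I_(N.+1./2) => (inord (i.*2) : 'I_N).
apply: (@leq_trans #|f @: setT|); last by rewrite (leq_trans (leq_imset_card _ _)) // cardsT card_ord.
apply: subset_leq_card; apply/subsetP => v; rewrite inE => hv.
have hi : v./2 < N.+1./2 by have := ltn_ord v; lia.
apply/imsetP; exists (Ordinal hi) => //; apply: val_inj; rewrite /= inordK /=; have := ltn_ord v; lia.
Qed.

Lemma union_bound (O : assignment cyc) : is_edge_cover cyc O ->
  N + #|AS O 0 :&: AS O 1| <= #|AS O 0| + #|AS O 1|.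
Proof.
move=> hcov.
have hT : AS O 0 :|: AS O 1 = setT.
  apply/setP => v; rewrite !inE; have [u [hu hm]] := hcov v.
  move: hu hm; rewrite adj_cyc => /orP[]/eqP ->.
    by rewrite marks_pred => ->.
  by rewrite marks_succ => ->; rewrite orbT.
have := cardsU (AS O 0) (AS O 1); rewrite hT cardsT card_ord.
have := subset_leq_card (subsetIl (AS O 0) (AS O 1)); lia.
Qed.

End Cyc.
Lemma INR_exp2 n : INR (2 ^ n) = (2 ^ n)%R.
Proof.
elim: n => [|n IH]; first by rewrite /= .
rewrite expnS -multE mult_INR IH /=. lra.
Qed.

Lemma exp_ge n : (2 ^ n <= exp (INR n))%R.
Proof.
elim: n => [|n IH]; first by rewrite /= exp_0; lra.
rewrite S_INR exp_plus /=.
have h1 : (2 < exp 1)%R by have := exp_ineq1 1 R1_neq_R0; lra.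
have h2 : (0 < 2 ^ n)%R by apply: pow_lt; lra.
nra.
Qed.

Lemma real_bound (l k : nat) : (65 <= k)%N ->
  Rlt (INR l) (Rmult (/ 8) (ln (INR k))) -> (2 ^ (l * 2 + 6) < k)%N.
Proof.
move=> hk hl.
have hk0 : (0 < INR k)%R by apply: lt_0_INR; apply/ltP; lia.
have h1 : (exp (INR l * 8) < INR k)%R.
  rewrite -(exp_ln (INR k) hk0); apply: exp_increasing; lra.
have h2 : (INR (2 ^ (l * 8)) < INR k)%R.
  rewrite INR_exp2; apply: Rle_lt_trans (exp_ge _) _.
  have -> : INR (l * 8) = (INR l * 8)%R by rewrite -multE mult_INR /=; lra.
  exact: h1.
have h3 : (2 ^ (l * 8) < k)%N by apply/ltP; apply: INR_lt.
case: l {hl h1 h2} h3 => [|l] h3; first by rewrite /=; lia.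
apply: leq_ltn_trans h3; rewrite leq_exp2l //; lia.
Qed.

Definition letter := (bitstring * bitstring)%type.
Definition sigt := (letter * letter)%type.
Definition esig (V : verifier) : rel sigt :=
  fun s s' => (s.2 == s'.1) && V s.2.1 s.2.2 [:: s.1.2; s'.2.2].

Fixpoint Ls n : seq bitstring :=
  if n is n'.+1 then [::] :: map (cons true) (Ls n') ++ map (cons false) (Ls n')
  else [:: [::]].

Lemma mem_Ls n (s : bitstring) : size s <= n -> s \in Ls n.
Proof.
elim: n s => [|n IH] [|b s] //= hs.
rewrite inE mem_cat; case: b.
  by rewrite (map_f (cons true) (IH s hs)) orbT.
by rewrite (map_f (cons false) (IH s hs)) !orbT.
Qed.

Lemma size_Ls n : size (Ls n) < 2 ^ n.+1.
Proof.
elim: n => [|n IH] //=; rewrite size_cat !size_map expnS; move: (2 ^ n.+1) IH => X IH.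
have h : forall a b c, a < X -> b = a -> c = a -> (b + c).+1 < 2 * X by move=> *; lia.
exact: h IH erefl erefl.
Qed.

Definition Os : seq bitstring := [:: [:: true; true]; [:: true; false]; [:: false; true]; [:: false; false]].
Definition US n : seq letter := [seq (o, l) | o <- Os, l <- Ls n].

Lemma size_US n : size (US n) < 2 ^ (n + 3).
Proof. rewrite size_allpairs /= expnD. have := size_Ls n; rewrite expnS; lia. Qed.

Lemma cyc_nth (e : rel sigt) d (C : seq sigt) m : cycle e C -> size C = m.+3 ->
  forall v : 'I_m.+3, e (nth d C (cpred v)) (nth d C v).
Proof.
case: C => [|x p] // hc hs v; move: hc => /= /(pathP d) hp.
have hsp : size p = m.+2 by move: hs => /= [].
rewrite val_cpred; case: ifP => /eqP hv.
  have := hp (size p); rewrite size_rcons ltnSn => /(_ isT).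
  rewrite -rcons_cons nth_rcons /= ltnSn nth_rcons ltnn eqxx hsp hv => h.
  by rewrite (_ : nth d p m.+1 = nth d (x :: p) m.+2).
have hv' : (v.-1 < size (rcons p x))%N by rewrite size_rcons hsp; have := ltn_ord v; lia.
have := hp _ hv'; rewrite nth_rcons (_ : (v.-1 < size p)%N); last by rewrite hsp; have := ltn_ord v; lia.
rewrite -rcons_cons nth_rcons /= (_ : (v.-1 < (size p).+1)%N); last by have := ltn_ord v; lia.
by case: (nat_of_ord v) hv => // j _.
Qed.

Lemma cyc_accept (V : verifier) d (C : seq sigt) m : cycle (esig V) C -> size C = m.+3 ->
  accepts V (cyc m) (io_config (cyc m) (ec_input (cyc m)) (fun v : 'I_m.+3 => (nth d C v).2.1))
     (fun v : 'I_m.+3 => (nth d C v).2.2).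
Proof.
move=> hc hs v.
have h1 := cyc_nth d hc hs v.
have h2 := cyc_nth d hc hs (csucc v); rewrite cpred_succ in h2.
case/andP: h1 => /eqP e1 _; case/andP: h2 => _ h2.
rewrite /io_config /=; by rewrite e1.
Qed.

Lemma nth_flat d (c : seq sigt) t i j : i < t -> j < size c ->
  nth d (flatten (nseq t c)) (i * size c + j) = nth d c j.
Proof.
elim: t i => [|t IH] i // hi hj; rewrite /= nth_cat.
case: i hi => [|i] hi; first by rewrite mul0n add0n hj.
rewrite ifN; last by rewrite -leqNgt mulSn; lia.
rewrite (_ : i.+1 * size c + j - size c = i * size c + j); last by rewrite mulSn; lia.
by apply: IH.
Qed.

Lemma size_flat (c : seq sigt) t : size (flatten (nseq t c)) = t * size c.
Proof. by elim: t => [|t IH] //=; rewrite size_cat IH mulSn. Qed.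

Lemma flatS (c : seq sigt) t : flatten (nseq t.+1 c) = c ++ flatten (nseq t c).
Proof. by []. Qed.

Lemma cycle_flat (e : rel sigt) (c : seq sigt) t : cycle e c -> cycle e (flatten (nseq t.+1 c)).
Proof.
case: c => [|y s]; first by elim: t.
move=> hc.
have hl : forall t x, last x (flatten (nseq t.+1 (y :: s))) = last y s.
  elim=> [|t' IH] x; first by rewrite /= cats0.
  by rewrite flatS last_cat IH.
rewrite (cycle_path y) hl.
have hp : path e (last y s) (y :: s) by move: hc; rewrite (cycle_path y).
elim: t.+1 => [|t' IH] //; rewrite flatS cat_path hp /=.
by rewrite IH.
Qed.

Definition O0 (m : nat) : assignment (cyc m) := fun v : 'I_m.+3 => [:: odd v || (v == 0 :> nat); ~~ odd v].
Definition O2 (m : nat) : assignment (cyc m) := fun v : 'I_m.+3 => [:: odd v; ~~ odd v].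
Arguments O0 : clear implicits.
Arguments O2 : clear implicits.

Lemma O0_feas m : ~~ odd m -> ec_feasible (cyc m) (O0 m).
Proof.
move=> hm; apply: feas_of => //.
  move=> u; rewrite /O0 /= val_csucc; case: ifP => h /=; first by rewrite orbF.
  have -> : (u : nat) = m.+2 by move/negbT: h; rewrite -leqNgt; have := ltn_ord u; lia.
  by rewrite /= negbK (negbTE hm).
by move=> v; rewrite /O0 /=; case: (odd v); rewrite ?orbT.
Qed.

Lemma O2_feas m : odd m -> ec_feasible (cyc m) (O2 m).
Proof.
move=> hm; apply: feas_of => //.
  move=> u; rewrite /O2 /= val_csucc; case: ifP => h //=.
  have -> : (u : nat) = m.+2 by move/negbT: h; rewrite -leqNgt; have := ltn_ord u; lia.
  by rewrite /= hm.
by move=> v; rewrite /O2 /=; case: (odd v).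
Qed.

Lemma cost_lb m (O : assignment (cyc m)) : ec_feasible (cyc m) O -> m.+3 <= 2 * ec_cost (cyc m) O.
Proof.
move=> [[_ hc] hcov].
have := union_bound hcov; have := A0_le_A1 hc; have := A1_le_cost hc; lia.
Qed.

Lemma cost_ub_even m (O : assignment (cyc m)) : ec_feasible (cyc m) O ->
  (forall v : 'I_m.+3, nth false (O v) 1 = ~~ odd v) -> ec_cost (cyc m) O <= m.+4./2.
Proof.
move=> [[_ hc] _] h; apply: leq_trans (cost_le_A1 hc) _.
rewrite (_ : AS O 1 = [set v : 'I_m.+3 | ~~ odd v]); first exact: evens_le.
by apply/setP => v; rewrite !inE h.
Qed.

Lemma univ_cyc k m (O : assignment (cyc m)) : 2 * k + 1 <= m.+3 -> ec_feasible (cyc m) O ->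
  ec_universe k (cyc m).
Proof. move=> h hf; split; first exact: wf_cyc; split; [exact: oddgirth | by exists O]. Qed.

Lemma lnk_pos (k : nat) : (65 <= k)%N -> Rlt 0 (Rmult (/ 8) (ln (INR k))).
Proof.
move=> hk; have h1 : (1 < INR k)%R by rewrite -INR_1; apply: lt_INR; apply/ltP; lia.
have : (0 < ln (INR k))%R by rewrite -ln_1; apply: ln_increasing; lra.
have : (0 < / 8)%R by apply: Rinv_0_lt_compat; lra.
nra.
Qed.

Lemma final_arith k t L m1 c1 c2 a0 a1 i1 : m1.+3 = t * L -> odd m1 -> 0 < t ->
  k * c1 <= k.+1 * c2 -> c2 <= m1.+4./2 -> m1.+3 + i1 <= a0 + a1 -> a0 <= a1 -> a1 <= c1 ->
  t <= i1 -> k <= L.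
Proof.
move=> hN hm ht hr hc2 hu ha1 ha2 hd.
have h1 : t * L + t <= 2 * c1 by rewrite -hN; lia.
have h2 : 2 * c2 <= t * L by rewrite -hN; lia.
have e1 : k * (t * L + t) <= k * (2 * c1) by apply: leq_mul.
have e2 : k.+1 * (2 * c2) <= k.+1 * (t * L) by apply: leq_mul.
have e3 : k * t <= t * L.
  move: e1 e2 hr; rewrite mulnCA (mulnCA k.+1) mulnDr mulSn.
  move: (k * c1) (k.+1 * c2) (k * (t * L)) (k * t) (t * L) => A B Y Z X.
  lia.
by rewrite -(leq_pmul2l ht) mulnC.
Qed.

Theorem theorem5p9 :
  exists c : R, Rlt 0 c /\
  exists k0 : nat, forall k : nat, (1 <= k)%N -> (k0 <= k)%N ->
    forall (V : verifier) (P : prover),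
      ec_APLS k V P -> ec_proof_size_ge k P (Rmult c (ln (INR k))).
Proof.
exists (/ 8)%R; split; first by apply: Rinv_0_lt_compat; lra.
exists 65 => k hk1 hk0 V P [hyes hno].
apply: NNPP => hneg.
pose m0 := ((k - 1) * 2)%N.
have hm0 : ~~ odd m0 by rewrite /m0; lia.
have feas0 := O0_feas hm0.
have univ0 : ec_universe k (cyc m0) by apply: (univ_cyc (O := O0 m0)) => //; rewrite /m0; lia.
have opt0 : ec_optimal (cyc m0) (O0 m0).
  split=> // O' hO'; have := cost_lb hO'.
  have := cost_ub_even feas0 (fun v => erefl); rewrite /m0; lia.
pose S0 := io_config (cyc m0) (ec_input (cyc m0)) (O0 m0).
pose L0 := P (cyc m0) S0.
have hacc : accepts V (cyc m0) S0 L0 := hyes (cyc m0) (O0 m0) univ0 opt0.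
have hsmall : forall v, Rlt (INR (size (L0 v))) (Rmult (/8) (ln (INR k))).
  move=> v; apply: Rnot_le_lt => hle; apply: hneg.
  by exists (cyc m0), (O0 m0); split=> //; split=> //; exists v.
pose l0 := (\max_(v : 'I_m0.+3) size (L0 v))%N.
have hl0le : forall v : 'I_m0.+3, (size (L0 v) <= l0)%N.
  by move=> v; apply: (@leq_bigmax _ (fun v : 'I_m0.+3 => size (L0 v)) v).
have hl0 : Rlt (INR l0) (Rmult (/8) (ln (INR k))).
  rewrite /l0; apply: (big_ind (fun x => Rlt (INR x) _)).
  - exact: lnk_pos.
  - by move=> x y hx hy; case: (leqP x y).
  - by move=> i _; exact: hsmall.
have hbound := real_bound hk0 hl0.
pose x := fun v : 'I_m0.+3 => (O0 m0 v, L0 v) : letter.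
pose s := fun v : 'I_m0.+3 => (x (cpred v), x v) : sigt.
have hstep : forall u : 'I_m0.+3, esig V (s u) (s (csucc u)).
  move=> u; rewrite /esig /s /= cpred_succ eqxx /=.
  by have := hacc u.
have hmap : forall a q, path (frel (@csucc m0)) a q -> path (esig V) (s a) (map s q).
  move=> a q; elim: q a => [|y q IH] a //= /andP [/eqP <- hq].
  by rewrite hstep IH.
have [q [hq hlq]] := walk (ltnSn m0.+2).
have hq2 : path (frel (@csucc m0)) ord0 (rcons q ord0).
  rewrite rcons_path hq hlq /=; apply/eqP/val_inj; rewrite /= val_csucc inordK //.
  by rewrite ltnn.
have hP := hmap _ _ hq2; rewrite map_rcons rcons_path in hP.
case/andP: hP => hP hlast.
pose s0 := s ord0.
move: hlast; case: (shortenP hP) => p' hp' hu hsub hlast.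
pose c := s0 :: p'.
have hcyc : cycle (esig V) c by rewrite /c /= rcons_path hp' hlast.
have hxin : forall v, x v \in US l0.
  move=> v; apply: allpairs_f.
    by rewrite /O0 /Os; case: (odd v); case: (_ == _).
  apply: mem_Ls; exact: hl0le.
have hsin : forall v, s v \in [seq (a, b) | a <- US l0, b <- US l0].
  by move=> v; apply: allpairs_f; apply: hxin.
have hsizec : (size c < k)%N.
  have : (size c <= size [seq (a, b) | a <- US l0, b <- US l0])%N.
    apply: uniq_leq_size hu _ => w; rewrite inE => /orP [/eqP -> | /hsub /mapP [v _ ->]];
      exact: hsin.
  rewrite size_allpairs => h.
  have h2 := ltn_mul (size_US l0) (size_US l0).
  rewrite -expnD (_ : l0 + 3 + (l0 + 3) = l0 * 2 + 6) in h2; last by lia.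
  lia.
pose L := size c.
have hL : (0 < L)%N by [].
pose t := ((k + 1) * 2)%N.
have htL : (4 <= t * L)%N by rewrite /t; apply: (@leq_trans (4 * 1)) => //; apply: leq_mul => //; lia.
pose m1 := (t * L - 3)%N.
have hN1 : m1.+3 = (t * L)%N by rewrite /m1; lia.
pose C := flatten (nseq t c).
have hC : cycle (esig V) C by rewrite /C (_ : t = (2 * k + 1).+1); [apply: cycle_flat | rewrite /t; lia].
have hsC : size C = m1.+3 by rewrite size_flat hN1.
pose O1 := fun v : 'I_m1.+3 => (nth s0 C v).2.1.
pose L1 := fun v : 'I_m1.+3 => (nth s0 C v).2.2.
have hacc1 := cyc_accept s0 hC hsC.
have hm1 : odd m1.
  have : m1.+3 = (2 * ((k + 1) * L))%N by rewrite hN1 /t mulnAC mulnC.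
  move: ((k + 1) * L)%N => X; lia.
have univ1 : ec_universe k (cyc m1).
  apply: (univ_cyc (O := O2 m1)); last exact: O2_feas.
  rewrite hN1 /t; apply: (@leq_trans ((k + 1) * 2 * 1)); first by lia.
  exact: leq_mul.
apply: (hno (cyc m1) O1 univ1 _ L1 hacc1).
move=> [hf hratio].
have hr := hratio (O2 m1) (O2_feas hm1).
have hc2 := cost_ub_even (O2_feas hm1) (fun v => erefl).
have [[_ hc1] hcov1] := hf.
have hu1 := union_bound hcov1.
have ha1 := A0_le_A1 hc1.
have ha2 := A1_le_cost hc1.
have hdef : (t <= #|AS O1 0 :&: AS O1 1|)%N.
  pose f := fun i : 'I_t => (inord (i * L) : 'I_m1.+3).
  have hfi : forall i : 'I_t, (i * L < m1.+3)%N.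
    by move=> i; rewrite hN1 ltn_mul2r hL ltn_ord.
  have finj : injective f.
    move=> i j /(congr1 val); rewrite /f /= !inordK ?hfi // => /eqP.
    by rewrite eqn_mul2r eqn0Ngt hL /= => /eqP /val_inj.
  rewrite -[X in (X <= _)%N]card_ord -cardsT -(card_imset _ finj).
  apply: subset_leq_card; apply/subsetP => w /imsetP [i _ ->].
  have e : O1 (f i) = [:: true; true].
    rewrite /O1 /f inordK ?hfi // -[(i * L)%N]addn0 nth_flat //.
  by rewrite !inE e.
move: hr hc2 hu1 ha1 ha2 hdef.
set c1 := ec_cost (cyc m1) O1; set c2 := ec_cost (cyc m1) (O2 m1).
set a0 := #|AS O1 0|; set a1 := #|AS O1 1|; set i1 := #|_ :&: _|.
move=> hr hc2 hu1 ha1 ha2 hdef.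
have := final_arith hN1 hm1 (_ : (0 < t)%N) hr hc2 hu1 ha1 ha2 hdef.
rewrite /t; move=> /(_ (ltac:(lia))) hkl; move: hsizec; rewrite -/L; clear -hkl; lia.
Qed.
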